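(* For any point $\mathbf c\in\mathcal K_{d;\le2}\cap\mathcal U_{d;\le2}$, the orbit $O_d(\mathbb R)\cdot\mathbf c$ and $\mathcal K_{d;\le2}$ intersect transversally, i.e. at every point $q$ of their intersection $T_q(O_d(\mathbb R)\cdot\mathbf c)+T_q\mathcal K_{d;\le2}=\mathbb R^d\oplus\mathfrak{so}(d,\mathbb R)$.
   Context: Fix $d\ge2$. Consider $\mathbb R^d\oplus\mathfrak{so}(d,\mathbb R)$ with elements $(v,M)$, $v=(c_1,\dots,c_d)^\top$, $M$ real skew-symmetric with $M_{ij}=c_{ij}=-M_{ji}$ for $i<j$; $O_d(\mathbb R)$ acts by $A\cdot(v,M)=(Av,AMA^\top)$. Let $\mathcal K_{d;\le2}=\{(v,M): c_i=0\ (1\le i\le d-1),\ c_{j(i+1)}=0\ (1\le j<i\le d-1),\ c_d>0,\ c_{i(i+1)}>0\ (1\le i\le d-1)\}$. $\mathcal U_{d;\le2}$: on $V_{\mathbb C}=\mathbb C^d\oplus\mathfrak{so}(d,\mathbb C)$ (same coordinates) with $O_d(\mathbb C)=\{A:AA^\top=I\}$ acting the same way, let $L^{(1)}=\{c_1=\dots=c_{d-1}=0\}$ and for $2\le i\le d-1$, $L^{(i)}=\{(v,M)\in L^{(i-1)}: c_{k(d-i+2)}=0,\ 1\le k\le d-i\}$. Let $f_1=c_1^2+\dots+c_d^2$; for $2\le i\le d-1$ let $f_i$ be the $O_d(\mathbb C)$-invariant rational function on $V_{\mathbb C}$ with $f_i|_{L^{(i-1)}}=c_{1(d-i+2)}^2+\dots+c_{(d-i+1)(d-i+2)}^2$;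 let $f_d$ be the invariant rational function with $f_d|_{L^{(d-1)}}=c_{12}^2$ (they exist, have real coefficients, and are unique). $\mathcal U_{d;\le2}$ is the set of real $(v,M)$ in the domain of every $f_k$ with $f_k(v,M)\neq0$ for all $k$. *)

(* Defs.v *)
From HB Require Import structures.
From mathcomp Require Import all_boot all_order all_algebra.
From mathcomp Require Import reals.
From mathcomp Require Import complex.
From mathcomp Require mpoly.

Set Implicit Arguments.
Unset Strict Implicit.
Unset Printing Implicit Defensive.
Import Order.TTheory GRing.Theory Num.Theory.
Local Open Scope ring_scope.

(* The space R^d (+) so(d,F): pairs (v, M), v a column vector, M a     *)
(* d x d matrix which is required to be skew_mx-symmetric.                *)
(* Coordinates (1-indexed in the paper) c_i = v (i-1) 0,                *)
(* c_{ij} = M (i-1) (j-1) for i < j.                                    *)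

Definition skew_mx (F : nzRingType) (d : nat) (M : 'M[F]_d) : Prop := M^T = - M.

Definition orth_mx (F : nzRingType) (d : nat) (A : 'M[F]_d) : Prop :=
  A *m A^T = 1%:M.

Definition act_v (F : nzRingType) (d : nat) (A : 'M[F]_d) (v : 'cV[F]_d) :
  'cV[F]_d := A *m v.
Definition act_M (F : nzRingType) (d : nat) (A : 'M[F]_d) (M : 'M[F]_d) :
  'M[F]_d := A *m M *m A^T.

(* c_i = 0 (1 <= i <= d-1), c_{j(i+1)} = 0 (1 <= j < i <= d-1),
   c_d > 0, c_{i(i+1)} > 0 (1 <= i <= d-1). *)
Definition inK (R : realType) (d : nat) (v : 'cV[R]_d) (M : 'M[R]_d) : Prop :=
  skew_mx M /\
  (forall j : 'I_d, (j < d.-1)%N -> v j 0 = 0) /\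
  (forall j l : 'I_d, (j.+1 < l)%N -> M j l = 0) /\
  (forall j : 'I_d, (j : nat) = d.-1 -> 0 < v j 0) /\
  (forall i l : 'I_d, (l : nat) = i.+1 -> 0 < M i l).

(* The linear span in which K_{d;<=2} is open: its tangent space at
   every one of its points. *)
Definition inTK (R : realType) (d : nat) (w : 'cV[R]_d) (N : 'M[R]_d) : Prop :=
  skew_mx N /\
  (forall j : 'I_d, (j < d.-1)%N -> w j 0 = 0) /\
  (forall j l : 'I_d, (j.+1 < l)%N -> N j l = 0).

(* Tangent space of the orbit O_d(R).(v,M) at (v,M): the image of the
   infinitesimal action X |-> d/dt exp(tX).(v,M) |_{t=0}
   = (X v, X M - M X), X in so(d,R). *)
Definition inTorbit (R : realType) (d : nat) (v : 'cV[R]_d) (M : 'M[R]_d)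
  (w : 'cV[R]_d) (N : 'M[R]_d) : Prop :=
  exists X : 'M[R]_d, skew_mx X /\ w = X *m v /\ N = X *m M - M *m X.

(* Polynomial functions on V_C = C^d (+) so(d,C): multivariate polynomials
   in the d + d*d coordinates (v, all entries of M), evaluated at
   points with M skew_mx. *)
Definition coords (F : nzRingType) (d : nat) (v : 'cV[F]_d) (M : 'M[F]_d) :
  'I_(d + d * d) -> F := fun k => (row_mx v^T (mxvec M)) 0 k.

Definition peval (F : comNzRingType) (d : nat) (P : mpoly.mpoly (d + d * d) F)
  (v : 'cV[F]_d) (M : 'M[F]_d) : F := mpoly.meval (coords v M) P.

(* L^{(0)} = V_C, L^{(1)} = {c_1 = ... = c_{d-1} = 0}, and for
   2 <= i <= d-1, L^{(i)} = L^{(i-1)} /\ {c_{k(d-i+2)} = 0, 1 <= k <= d-i}.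
   0-indexed: column d-m+1, rows k < d-m, for 2 <= m <= i. *)
Definition inL (F : nzRingType) (d i : nat) (v : 'cV[F]_d) (M : 'M[F]_d) : Prop :=
  ((1 <= i)%N -> forall j : 'I_d, (j < d.-1)%N -> v j 0 = 0) /\
  (forall m : nat, (2 <= m)%N -> (m <= i)%N ->
     forall k l : 'I_d, (l : nat) = (d - m + 1)%N -> (k < d - m)%N -> M k l = 0).

(* The prescribed restriction g_k of f_k to L^{(k-1)}:
   g_1 = c_1^2 + ... + c_d^2 (on L^{(0)} = V_C);
   g_i = c_{1(d-i+2)}^2 + ... + c_{(d-i+1)(d-i+2)}^2 for 2 <= i <= d-1;
   g_d = c_{12}^2. *)
Definition gfun (F : nzRingType) (d k : nat) (v : 'cV[F]_d) (M : 'M[F]_d) : F :=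
  if (k == 1)%N then \sum_(j < d) v j 0 ^+ 2
  else if (k == d)%N then
    \sum_(j < d) \sum_(l < d | ((j : nat) == 0%N) && ((l : nat) == 1%N)) M j l ^+ 2
  else \sum_(j < d) \sum_(l < d | ((j < d - k + 1)%N) && ((l : nat) == (d - k + 1)%N))
         M j l ^+ 2.

(* P / Q is (a representative of) an O_d(C)-invariant rational function on
   V_C whose restriction to L^{(k-1)} is g_k: Q does not vanish identically
   on L^{(k-1)}, P = g_k Q where Q <> 0 on L^{(k-1)}, and
   P(A.x) Q(x) = P(x) Q(A.x) for all A in O_d(C), x in V_C. *)
Definition fk_rep (R : realType) (d k : nat)
  (P Q : mpoly.mpoly (d + d * d) R[i]) : Prop :=
  (exists (v : 'cV[R[i]]_d) (M : 'M[R[i]]_d),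
      skew_mx M /\ inL (k.-1) v M /\ peval Q v M != 0) /\
  (forall (v : 'cV[R[i]]_d) (M : 'M[R[i]]_d),
      skew_mx M -> inL (k.-1) v M -> peval Q v M != 0 ->
      peval P v M = gfun k v M * peval Q v M) /\
  (forall (A : 'M[R[i]]_d) (v : 'cV[R[i]]_d) (M : 'M[R[i]]_d),
      orth_mx A -> skew_mx M ->
      peval P (act_v A v) (act_M A M) * peval Q v M =
      peval P v M * peval Q (act_v A v) (act_M A M)).

(* P / Q represents the rational function f_k (= P'/Q' for some fk_rep). *)
Definition represents_fk (R : realType) (d k : nat)
  (P Q : mpoly.mpoly (d + d * d) R[i]) : Prop :=
  (exists (v : 'cV[R[i]]_d) (M : 'M[R[i]]_d), skew_mx M /\ peval Q v M != 0) /\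
  exists P' Q', @fk_rep R d k P' Q' /\
    forall (v : 'cV[R[i]]_d) (M : 'M[R[i]]_d), skew_mx M ->
      peval P v M * peval Q' v M = peval P' v M * peval Q v M.

Definition cplx_v (R : realType) (d : nat) (v : 'cV[R]_d) : 'cV[R[i]]_d :=
  map_mx (fun r => (r%:C)%C) v.
Definition cplx_M (R : realType) (d : nat) (M : 'M[R]_d) : 'M[R[i]]_d :=
  map_mx (fun r => (r%:C)%C) M.

Definition fk_defined_nonzero (R : realType) (d k : nat)
  (v : 'cV[R]_d) (M : 'M[R]_d) : Prop :=
  exists P Q, @represents_fk R d k P Q /\
    peval Q (cplx_v v) (cplx_M M) != 0 /\ peval P (cplx_v v) (cplx_M M) != 0.

Definition inU (R : realType) (d : nat) (v : 'cV[R]_d) (M : 'M[R]_d) : Prop :=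
  skew_mx M /\ forall k : nat, (1 <= k <= d)%N -> @fk_defined_nonzero R d k v M.

(* Main.v *)
Require Import Defs.
From HB Require Import structures.
From mathcomp Require Import all_boot all_order all_algebra.
From mathcomp Require Import reals.
From mathcomp Require Import zify ring lra.
Import GRing.Theory Num.Theory.
Local Open Scope ring_scope.

Definition ystep (R : realType) (n : nat) (p : nat -> R) (Nf : nat -> nat -> R)
  (k : nat) (a b : nat -> R) : nat -> R :=
  fun j => (Nf j (n - k.+1)%N.+1 + b j * p (n - k.+1)%N.+1 + p j * a j.+1
            - (if j is j'.+1 then p j' * a j' else 0)) / p (n - k.+1)%N.

Fixpoint ypair (R : realType) (n : nat) (p : nat -> R) (Nf : nat -> nat -> R)
  (y0 : nat -> R) (k : nat) : (nat -> R) * (nat -> R) :=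
  match k with
  | 0 => (y0, fun _ => 0)
  | k'.+1 => let ab := ypair R n p Nf y0 k' in (@ystep R n p Nf k' ab.1 ab.2, ab.1)
  end.

Definition xf (R : realType) (n : nat) (p : nat -> R) (Nf : nat -> nat -> R)
  (y0 : nat -> R) (j m : nat) : R :=
  if (j < m)%N then (@ypair R n p Nf y0 (n - m)).1 j
  else if (m < j)%N then - (@ypair R n p Nf y0 (n - j)).1 m else 0.

Lemma sum_pick (R : realType) (d : nat) (f : nat -> R) (a : nat) :
  \sum_(i < d) (if (i : nat) == a then f i else 0) = if (a < d)%N then f a else 0.
Proof.
case: ifP => ha.
  rewrite (bigD1 (Ordinal ha)) //= eqxx big1 ?addr0 // => i hi.
  case: eqP => // e; move: hi; rewrite (_ : i = Ordinal ha) ?eqxx //.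
  by apply: val_inj.
apply: big1 => i _; case: eqP => // e; move: ha; by rewrite -e ltn_ord.
Qed.

Lemma sum_shift (R : realType) (d : nat) (f : nat -> R) (a : nat) :
  \sum_(i < d) (if (i : nat).+1 == a then f i else 0) =
  if (0 < a)%N && (a.-1 < d)%N then f a.-1 else 0.
Proof.
case: a => [|a] /=; first by apply: big1.
rewrite -sum_pick; apply: eq_bigr => i _; by rewrite eqSS.
Qed.

Lemma sum_pred (R : realType) (d : nat) (f : nat -> R) (a : nat) :
  \sum_(i < d) (if a.+1 == (i : nat) then f i else 0) =
  if (a.+1 < d)%N then f a.+1 else 0.
Proof. rewrite -sum_pick; apply: eq_bigr => i _; by rewrite eq_sym. Qed.
Lemma helper (R : realType) (n : nat) (hn : (1 <= n)%N) (u : 'cV[R]_n.+1) (P : 'M[R]_n.+1) :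
  inK u P -> forall (w : 'cV[R]_n.+1) (N : 'M[R]_n.+1), skew_mx N ->
  exists X : 'M[R]_n.+1, skew_mx X /\
   (forall j : 'I_n.+1, (j < n)%N -> (w - X *m u) j 0 = 0) /\
   (forall j l : 'I_n.+1, (j.+1 < l)%N -> (N - (X *m P - P *m X)) j l = 0).
Proof.
move=> [skP [u0 [Pup [upos ppos]]]] w N skN; rewrite /skew_mx in skP skN.
pose c : R := u (inord n) 0.
pose Pf (a b : nat) : R := P (inord a) (inord b).
pose p (a : nat) : R := Pf a a.+1.
pose Nf (a b : nat) : R := N (inord a) (inord b).
pose y0 (j : nat) := w (inord j) 0 / c.
pose x := @xf R n p Nf y0.
pose X : 'M[R]_n.+1 := \matrix_(j, m) x j m.
have cpos : 0 < c by apply: upos; rewrite inordK.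
have ppos' : forall m, (m < n)%N -> 0 < p m.
  move=> m hm; apply: ppos; rewrite !inordK //; lia.
have PfE : forall i l : 'I_n.+1, P i l = Pf i l by move=> i l; rewrite /Pf !inord_val.
have Pfsk : forall a b, Pf a b = - Pf b a.
  move=> a b; have := congr1 (fun A : 'M[R]_n.+1 => A (inord b) (inord a)) skP; rewrite !mxE => <-.
  by [].
have tri : forall i l : 'I_n.+1, P i l =
   (if (i : nat).+1 == l then Pf i l else 0) + (if (l : nat).+1 == i then Pf i l else 0).
  move=> i l; case: eqP => h1; case: eqP => h2; rewrite ?addr0 ?add0r ?PfE //.
    exfalso; lia.
  have : (i.+1 < l \/ l.+1 < i \/ i = l :> nat)%N by lia.
  case=> [h|[h|h]].
  - by rewrite -PfE Pup.
  - by rewrite Pfsk -PfE Pup // oppr0.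
  - have hh : l = i by apply: val_inj.
    subst l; have := Pfsk i i; lra.
have XPE : forall j l : 'I_n.+1, (X *m P) j l =
   (if (0 < l)%N && ((l : nat).-1 < n.+1)%N then x j l.-1 * Pf l.-1 l else 0) +
   (if ((l : nat).+1 < n.+1)%N then x j l.+1 * Pf l.+1 l else 0).
  move=> j l; rewrite mxE.
  under eq_bigr => i _ do rewrite tri mulrDr !mxE (fun_if (fun t => x j i * t)) mulr0
     (fun_if (fun t => x j i * t)) mulr0.
  rewrite big_split /=.
  rewrite (@sum_shift R _ (fun i => x j i * Pf i l)) (@sum_pred R _ (fun i => x j i * Pf i l)).
  by [].
have PXE : forall j l : 'I_n.+1, (P *m X) j l =
   (if ((j : nat).+1 < n.+1)%N then Pf j j.+1 * x j.+1 l else 0) +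
   (if (0 < j)%N && ((j : nat).-1 < n.+1)%N then Pf j j.-1 * x j.-1 l else 0).
  move=> j l; rewrite mxE.
  under eq_bigr => i _ do rewrite tri mulrDl !mxE (fun_if (fun t => t * x i l)) mul0r
     (fun_if (fun t => t * x i l)) mul0r.
  rewrite big_split /= addrC.
  rewrite (@sum_shift R _ (fun i => Pf j i * x i l)) (@sum_pred R _ (fun i => Pf j i * x i l)).
  by rewrite addrC.
have uE : forall i : 'I_n.+1, u i 0 = if (i : nat) == n then c else 0.
  move=> i; case: eqP => h.
    by rewrite /c; congr (u _ 0); apply: val_inj; rewrite /= inordK // h.
  apply: u0 => /=; have := ltn_ord i; lia.
exists X; split.
  apply/matrixP => i j; rewrite !mxE /x /xf.
  case: ltngtP => h //; rewrite ?opprK //; by rewrite oppr0.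
split.
  move=> j hj; rewrite !mxE.
  under eq_bigr => i _ do rewrite mxE uE (fun_if (fun t => x j i * t)) mulr0.
  rewrite (@sum_pick R _ (fun i => x j i * c)) ltnSn /x /xf hj subnn /= /y0 inord_val.
  field; by apply: lt0r_neq0.
move=> j l hjl.
have -> : (N - (X *m P - P *m X)) j l = N j l - ((X *m P) j l - (P *m X) j l) by rewrite !mxE.
rewrite XPE PXE.
set m := (l : nat).-1.
have hl : (l : nat) = m.+1 by rewrite /m; lia.
have hm : (m < n)%N by have := ltn_ord l; lia.
have hjm : (j < m)%N by lia.
rewrite (_ : N j l = Nf j m.+1); last by rewrite /Nf -hl !inord_val.
rewrite hl /=.
have xup : forall a b, (a < b)%N -> x a b = (@ypair R n p Nf y0 (n - b)).1 a.
  by move=> a b h; rewrite /x /xf h.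
have h1 : (m < n.+1)%N by lia.
have h2 : (j.+1 < n.+1)%N by lia.
rewrite h1 h2 (xup j m hjm) (xup j.+1 m.+1) //.
rewrite -(subnSK hm) /= /ystep.
rewrite (subnSK hm) (subKn (ltnW hm)).
have hb : (@ypair R n p Nf y0 (n - m.+1)).2 =
   if (m.+2 < n.+1)%N then (@ypair R n p Nf y0 (n - m.+2)).1 else (fun _ => 0).
  case: ifP => h.
    by rewrite -(subnSK (_ : m.+1 < n)%N) //; lia.
  by have -> : (n - m.+1 = 0)%N by lia.
rewrite hb.
have pm : p m != 0 by apply: lt0r_neq0; apply: ppos'.
have Pf2 : Pf m.+2 m.+1 = - p m.+1 by rewrite Pfsk.
rewrite -/(p m) -/(p j) Pf2.
have Pfj : forall a, Pf a.+1 a = - p a by move=> a; rewrite Pfsk.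
case: ifP => h3; [rewrite (xup j m.+2); last lia|];
  (case: j hjl hjm h2 => [[|j'] hj] //= hjl hjm h2;
   [ by field | rewrite (_ : (j' < n.+1)%N) ?(xup j' m.+1) ?Pfj; try lia; by field ]).
Qed.

Theorem lemma4p2 (R : realType) (d : nat) (hd : (2 <= d)%N)
  (v : 'cV[R]_d) (M : 'M[R]_d) :
  inK v M -> inU v M ->
  forall A : 'M[R]_d, orth_mx A ->
  inK (act_v A v) (act_M A M) ->
  forall (w : 'cV[R]_d) (N : 'M[R]_d), skew_mx N ->
  exists (w1 : 'cV[R]_d) (N1 : 'M[R]_d) (w2 : 'cV[R]_d) (N2 : 'M[R]_d),
    inTorbit (act_v A v) (act_M A M) w1 N1 /\ inTK w2 N2 /\
    w = w1 + w2 /\ N = N1 + N2.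
Proof.
move=> _ _ A _ hK w N skN.
destruct d as [|n]; first by [].
have hn : (1 <= n)%N by [].
have skP : skew_mx (act_M A M) by case: hK.
have [X [skX [hw hN]]] := @helper R n hn _ _ hK w N skN.
set u := act_v A v in hK hw *; set P := act_M A M in hK skP hN *.
exists (X *m u), (X *m P - P *m X), (w - X *m u), (N - (X *m P - P *m X)).
split; first by exists X.
split; last by split; rewrite addrC subrK.
split; last by split.
rewrite /skew_mx in skN skX skP *.
rewrite !raddfB /= (trmx_mul X P) (trmx_mul P X) skN skX skP !mulNmx !mulmxN !opprK.
by congr (_ + _); rewrite addrC.
Qed.
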